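(* Fix $N\ge1$, $L>0$, $\alpha>0$. There is a lower triangular matrix $H\in\mathbb{R}^{2N\times 2N}$ such that for every $d\ge1$, every operator $\mathbb{A}\colon\mathbb{R}^d\to\mathbb{R}^d$ and every $x_0\in\mathbb{R}^d$: (i) the iterates $x_0,x_{1/2},x_1,\dots,x_N$ of the Fast Extragradient method \[ x_{k+1/2}=x_k+\tfrac{1}{k+1}(x_0-x_k)-\tfrac{k}{k+1}\alpha\mathbb{A}x_k,\qquad x_{k+1}=x_k+\tfrac{1}{k+1}(x_0-x_k)-\alpha\mathbb{A}x_{k+1/2}\quad(k=0,\dots,N-1) \] satisfy $x_{(\ell+1)/2}=x_{\ell/2}-\frac1L\sum_{i=0}^{\ell}H_{\ell+1,i+1}\,\mathbb{A}x_{i/2}$ for $\ell=0,1,\dots,2N-1$; and (ii) the iterates $x_0,x_{1/2},x_1,\dots,x_N$ of the Dual Fast Extragradient method \[ x_{k+1/2}=x_k-\alpha z_k-\alpha\mathbb{A}x_k,\quad x_{k+1}=x_{k+1/2}-\tfrac{N-k-1}{N-k}\alpha(\mathbb{A}x_{k+1/2}-\mathbb{A}x_k),\quad z_{k+1}=\tfrac{N-k-1}{N-k}z_k-\tfrac{1}{N-k}\mathbb{A}x_{k+1/2} \] ($k=0,\dots,N-1$, $z_0=0$) satisfy $x_{(\ell+1)/2}=x_{\ell/2}-\frac1L\sum_{i=0}^{\ell}(H^A)_{\ell+1,i+1}\,\mathbb{A}x_{i/2}$ for $\ell=0,\dots,2N-1$, where $(H^A)_{\ell,i}=H_{2N+1-i,\,2N+1-\ell}$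 is the anti-diagonal transpose. That is, the two methods are H-duals of each other.
   Context: Rows and columns of $2N\times2N$ matrices are indexed $1,\dots,2N$. The iterates are indexed by half-integers $\ell/2$, $\ell=0,\dots,2N$. *)

(* Defs.v *)
From HB Require Import structures.
From mathcomp Require Import all_boot all_order all_algebra.
From mathcomp Require Import reals.
Set Implicit Arguments. Unset Strict Implicit. Unset Printing Implicit Defensive.
Import Order.TTheory GRing.Theory Num.Theory.
Local Open Scope ring_scope.

Section Methods.
Variables (R : realType) (d : nat).

Definition feg_half (alpha : R) (A : 'cV[R]_d -> 'cV[R]_d) (x0 : 'cV[R]_d) (k : nat) (xk : 'cV[R]_d) : 'cV[R]_d :=
  xk + (k.+1%:R)^-1 *: (x0 - xk) - (k%:R / k.+1%:R * alpha) *: A xk.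

Fixpoint feg_x (alpha : R) (A : 'cV[R]_d -> 'cV[R]_d) (x0 : 'cV[R]_d) (k : nat) : 'cV[R]_d :=
  match k with
  | 0 => x0
  | k'.+1 => let xk := feg_x alpha A x0 k' in
             xk + (k'.+1%:R)^-1 *: (x0 - xk) - alpha *: A (feg_half alpha A x0 k' xk)
  end.

(* Half-integer indexed iterates: feg_iter l = x_{l/2}. *)
Definition feg_iter (alpha : R) (A : 'cV[R]_d -> 'cV[R]_d) (x0 : 'cV[R]_d) (l : nat) : 'cV[R]_d :=
  if odd l then feg_half alpha A x0 l./2 (feg_x alpha A x0 l./2)
  else feg_x alpha A x0 l./2.

Definition dfeg_half (alpha : R) (A : 'cV[R]_d -> 'cV[R]_d) (xz : 'cV[R]_d * 'cV[R]_d) : 'cV[R]_d :=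
  xz.1 - alpha *: xz.2 - alpha *: A xz.1.

Fixpoint dfeg_xz (N : nat) (alpha : R) (A : 'cV[R]_d -> 'cV[R]_d) (x0 : 'cV[R]_d) (k : nat) : 'cV[R]_d * 'cV[R]_d :=
  match k with
  | 0 => (x0, 0)
  | k'.+1 =>
      let xz := dfeg_xz N alpha A x0 k' in
      let xh := dfeg_half alpha A xz in
      let c := (N - k' - 1)%N%:R / (N - k')%N%:R in
      (xh - (c * alpha) *: (A xh - A xz.1),
       c *: xz.2 - ((N - k')%N%:R)^-1 *: A xh)
  end.

Definition dfeg_iter N (alpha : R) (A : 'cV[R]_d -> 'cV[R]_d) (x0 : 'cV[R]_d) (l : nat) : 'cV[R]_d :=
  if odd l then dfeg_half alpha A (dfeg_xz N alpha A x0 l./2)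
  else (dfeg_xz N alpha A x0 l./2).1.
End Methods.

Definition lower_triangular (R : realType) (n : nat) (H : 'M[R]_n) : Prop :=
  forall i j : 'I_n, (i < j)%N -> H i j = 0.

(* Anti-diagonal transpose: (H^A)_{l,i} = H_{n+1-i, n+1-l} (1-based),
   i.e. H^A l i = H (rev_ord i) (rev_ord l) (0-based). *)
Definition anti_transpose (R : realType) (n : nat) (H : 'M[R]_n) : 'M[R]_n :=
  \matrix_(l, i) H (rev_ord i) (rev_ord l).

Definition H_generates (R : realType) (n d : nat) (H : 'M[R]_n) (L : R)
  (A : 'cV[R]_d -> 'cV[R]_d) (y : nat -> 'cV[R]_d) : Prop :=
  forall l : 'I_n,
    y l.+1 = y l - L^-1 *: \sum_(i < n | (i <= l)%N) H l i *: A (y i).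

(* Main.v *)
Require Import Defs.
From HB Require Import structures.
From mathcomp Require Import all_boot all_order all_algebra.
From mathcomp Require Import reals.
From mathcomp Require Import zify ring lra.
Import Order.TTheory GRing.Theory Num.Theory.
Local Open Scope ring_scope.

Lemma sum_le_ord (V : zmodType) (n l : nat) (F : nat -> V) : (l < n)%N ->
  \sum_(i < n | (i <= l)%N) F i = \sum_(i < l.+1) F i.
Proof.
move=> hl; rewrite (big_ord_widen _ F hl); apply: eq_bigl => i; by rewrite ltnS.
Qed.

Lemma sum_pairs (V : zmodType) (k : nat) (F : nat -> V) :
  \sum_(i < k.*2) F i = \sum_(j < k) (F j.*2 + F j.*2.+1).
Proof.
elim: k => [|k IH]; first by rewrite !big_ord0.
by rewrite doubleS !big_ord_recr /= IH addrA.
Qed.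

Lemma feg_iter_even (R : realType) d alpha A (x0 : 'cV[R]_d) k :
  feg_iter alpha A x0 k.*2 = feg_x alpha A x0 k.
Proof. by rewrite /feg_iter odd_double half_double. Qed.

Lemma feg_iter_odd (R : realType) d alpha A (x0 : 'cV[R]_d) k :
  feg_iter alpha A x0 k.*2.+1 = feg_half alpha A x0 k (feg_x alpha A x0 k).
Proof. by rewrite /feg_iter /= odd_double /= uphalf_double. Qed.

Lemma dfeg_iter_even (R : realType) d N alpha A (x0 : 'cV[R]_d) k :
  dfeg_iter N alpha A x0 k.*2 = (dfeg_xz N alpha A x0 k).1.
Proof. by rewrite /dfeg_iter odd_double half_double. Qed.

Lemma dfeg_iter_odd (R : realType) d N alpha A (x0 : 'cV[R]_d) k :
  dfeg_iter N alpha A x0 k.*2.+1 = dfeg_half alpha A (dfeg_xz N alpha A x0 k).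
Proof. by rewrite /dfeg_iter /= odd_double /= uphalf_double. Qed.

Lemma feg_key (R : realType) d alpha A (x0 : 'cV[R]_d) k :
  k%:R *: (feg_x alpha A x0 k - x0) =
  - (alpha *: \sum_(j < k) j.+1%:R *: A (feg_iter alpha A x0 j.*2.+1)).
Proof.
elim: k => [|k IH]; first by rewrite big_ord0 scale0r scaler0 oppr0.
rewrite big_ord_recr /= feg_iter_odd.
set S := \sum_(j < k) _. set G := A _.
set xk := feg_x alpha A x0 k.
apply/matrixP => a b; move/matrixP: IH => /(_ a b).
rewrite /= -/xk -/S !mxE => IH.
have hk : k%:R + 1 != 0 :> R by rewrite natr1 pnatr_eq0.
have key : k.+1%:R * (xk a b + (k.+1%:R)^-1 * (x0 a b - xk a b) - alpha * G a b - x0 a b)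
   + alpha * (S a b + k.+1%:R * G a b)
   = k%:R * (xk a b - x0 a b) + alpha * S a b.
  rewrite -natr1. field. done.
apply/eqP; rewrite -subr_eq0 opprK key IH; by rewrite addrC subrr.
Qed.
Lemma dfeg_key (R : realType) d N alpha A (x0 : 'cV[R]_d) k : (k < N)%N ->
  (dfeg_xz N alpha A x0 k).2 =
  - \sum_(j < k) ((N - k)%N%:R / ((N - j - 1)%N%:R * (N - j)%N%:R)) *:
      A (dfeg_iter N alpha A x0 j.*2.+1).
Proof.
elim: k => [|k IH] hk; first by rewrite big_ord0 oppr0.
rewrite big_ord_recr /= IH; last by lia.
rewrite dfeg_iter_odd.
set G := A _.
set c := (N - k - 1)%N%:R / (N - k)%N%:R.
have hb : (N - k)%N%:R != 0 :> R by rewrite pnatr_eq0; lia.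
have ha : (N - k - 1)%N%:R != 0 :> R by rewrite pnatr_eq0; lia.
have -> : \sum_(j < k) ((N - k.+1)%N%:R / ((N - j - 1)%N%:R * (N - j)%N%:R)) *:
      A (dfeg_iter N alpha A x0 j.*2.+1) =
   c *: \sum_(j < k) ((N - k)%N%:R / ((N - j - 1)%N%:R * (N - j)%N%:R)) *:
      A (dfeg_iter N alpha A x0 j.*2.+1).
  rewrite scaler_sumr; apply: eq_bigr => j _; have := ltn_ord j => hjk; rewrite scalerA; congr (_ *: _).
  have hj1 : (N - j - 1)%N%:R != 0 :> R by rewrite pnatr_eq0; lia.
  have hj2 : (N - j)%N%:R != 0 :> R by rewrite pnatr_eq0; lia.
  rewrite /c subnS -subn1. field. by rewrite hj1 hj2 hb.
have -> : (N - k.+1)%N%:R / ((N - k - 1)%N%:R * (N - k)%N%:R) = ((N - k)%N%:R)^-1 :> R.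
  rewrite subnS -subn1. field. by rewrite ha hb.
by rewrite scalerN opprD.
Qed.

Definition hv (R : realType) (l i : nat) : R :=
  if odd l then (if i == l then 1 else if i == l.-1 then - (l./2%:R / l./2.+1%:R) else 0)
  else if i == l then l./2%:R / l./2.+1%:R
  else if odd i && (i < l)%N then - (i./2.+1%:R / (l./2%:R * l./2.+1%:R)) else 0.

Lemma hv_odd_row (R : realType) a i : hv R a.*2.+1 i =
  if i == a.*2.+1 then 1 else if i == a.*2 then - (a%:R / a.+1%:R) else 0.
Proof. by rewrite /hv /= odd_double /= uphalf_double. Qed.

Lemma hv_even_row (R : realType) a i : hv R a.*2 i =
  if i == a.*2 then a%:R / a.+1%:R
  else if odd i && (i < a.*2)%N then - (i./2.+1%:R / (a%:R * a.+1%:R)) else 0.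
Proof. by rewrite /hv odd_double half_double. Qed.

Lemma half_oddS a : (a.*2.+1)./2 = a.
Proof. by rewrite /= uphalf_double. Qed.

Definition Hmat (R : realType) (N : nat) (alpha L : R) : 'M[R]_(2 * N) :=
  \matrix_(l, i) (alpha * L * hv R l i).

Theorem proposition6p2 (R : realType) (N : nat) (L alpha : R) :
  (1 <= N)%N -> 0 < L -> 0 < alpha ->
  exists H : 'M[R]_(2 * N),
    lower_triangular H /\
    forall (d : nat) (A : 'cV[R]_d -> 'cV[R]_d) (x0 : 'cV[R]_d),
      (1 <= d)%N ->
      H_generates H L A (feg_iter alpha A x0) /\
      H_generates (anti_transpose H) L A (dfeg_iter N alpha A x0).
Proof.
move=> hN hL ha; exists (Hmat R N alpha L); split.
  move=> i j hij; rewrite mxE /hv.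
  have e1 : (j == i :> nat) = false by lia.
  have e2 : (j == i.-1 :> nat) = false by lia.
  have e3 : (j < i)%N = false by lia.
  by case: ifP => _; rewrite e1 ?e2 ?e3 ?andbF mulr0.
have hL0 : L != 0 by rewrite gt_eqF.
have ha0 : alpha != 0 by rewrite gt_eqF.
move=> d A x0 _; split.
  move=> l.
  under eq_bigr => i _ do rewrite mxE.
  rewrite (sum_le_ord _ _ _ (fun i : nat => (alpha * L * hv R l i) *: A (feg_iter alpha A x0 i)) (ltn_ord l)).
  have hl := odd_double_half l. set k := l./2 in hl. clearbody k.
  case ho: (odd l) in hl; rewrite /= in hl; rewrite -hl.
  - rewrite add1n big_ord_recr big_ord_recr /=.
    rewrite big1; last first.
      move=> i _; have := ltn_ord i; move: (nat_of_ord i) => i' hi.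
      rewrite hv_odd_row.
      have e1 : (i' == k.*2.+1) = false by rewrite -!muln2; lia.
      have e2 : (i' == k.*2) = false by rewrite -!muln2; lia.
      by rewrite e1 e2 mulr0 scale0r.
    rewrite !hv_odd_row eqxx (_ : (k.*2 == k.*2.+1) = false); last by rewrite -!muln2; lia.
    rewrite eqxx -doubleS feg_iter_even feg_iter_odd feg_iter_even /= /feg_half.
    set xk := feg_x alpha A x0 k.
    set G1 := A (_ + _ - _).
    apply/matrixP => a b; rewrite !mxE.
    have hk : k%:R + 1 != 0 :> R by rewrite natr1 pnatr_eq0.
    rewrite -natr1. field. by rewrite hk hL0.
  - rewrite add0n big_ord_recr /=.
    rewrite (sum_pairs _ k (fun i : nat => (alpha*L*hv R k.*2 i) *: A (feg_iter alpha A x0 i))).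
    rewrite (eq_bigr (fun j : 'I_k => (-(alpha*L)/(k%:R*k.+1%:R)) *:
        (j.+1%:R *: A (feg_iter alpha A x0 j.*2.+1)))); last first.
      move=> j _; have := ltn_ord j; move: (nat_of_ord j) => j' hj.
      rewrite !hv_even_row odd_double.
      have e1 : (j'.*2 == k.*2) = false by rewrite -!muln2; lia.
      have e2 : (j'.*2.+1 == k.*2) = false by rewrite -!muln2; lia.
      have e3 : (j'.*2.+1 < k.*2)%N by rewrite -!muln2; lia.
      rewrite e1 e2 /= odd_double e3 /= uphalf_double mulr0 scale0r add0r scalerA.
      congr (_ *: _); ring.
    rewrite -scaler_sumr hv_even_row eqxx feg_iter_odd feg_iter_even /feg_half.
    have [k0|kpos] := posnP k.
      subst k; rewrite big_ord0 scaler0 add0r /=.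
      apply/matrixP => a b; rewrite !mxE. field. done.
    have key := feg_key R d alpha A x0 k.
    set S := \sum_(j < k) _ in key *.
    set xk := feg_x alpha A x0 k in key *.
    apply/matrixP => a b; move/matrixP: key => /(_ a b); rewrite !mxE => key.
    have hk : k%:R != 0 :> R by rewrite pnatr_eq0; lia.
    have hk1 : k%:R + 1 != 0 :> R by rewrite natr1 pnatr_eq0.
    have key2 : (xk a b + (k.+1%:R)^-1 * (x0 a b - xk a b) - k%:R / k.+1%:R * alpha * A xk a b)
       - (xk a b - L^-1 * (- (alpha * L) / (k%:R * k.+1%:R) * S a b + alpha * L * (k%:R / k.+1%:R) * A xk a b))
       = - (k%:R * k.+1%:R)^-1 * (k%:R * (xk a b - x0 a b) - - (alpha * S a b)).
      rewrite -natr1. field. by rewrite hk hk1 hL0.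
    apply/eqP; rewrite -subr_eq0 key2 key subrr mulr0 //.
move=> l.
rewrite /anti_transpose; under eq_bigr => i _ do rewrite !mxE /=.
rewrite (sum_le_ord _ _ _ (fun i : nat => (alpha * L * hv R (2*N - i.+1) (2*N - l.+1)) *: A (dfeg_iter N alpha A x0 i)) (ltn_ord l)).
have hlN := ltn_ord l.
have hl := odd_double_half l. set k := l./2 in hl. clearbody k.
case ho: (odd l) in hl; rewrite /= in hl; rewrite -hl; rewrite -hl in hlN.
- rewrite add1n in hlN *. rewrite big_ord_recr big_ord_recr /=.
  rewrite (sum_pairs _ k (fun i : nat => (alpha * L * hv R (2*N - i.+1) (2*N - (k.*2.+1).+1)) *: A (dfeg_iter N alpha A x0 i))).
  have ec : (2 * N - (k.*2.+1).+1 = (N-k-1).*2)%N by rewrite -!muln2; lia.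
  rewrite ec big1; last first.
    move=> j _; have := ltn_ord j; move: (nat_of_ord j) => j' hj.
    have e1 : (2 * N - (j'.*2).+1 = (N-j'-1).*2.+1)%N by rewrite -!muln2; lia.
    have e2 : (2 * N - (j'.*2.+1).+1 = (N-j'-1).*2)%N by rewrite -!muln2; lia.
    rewrite e1 e2 hv_odd_row hv_even_row.
    have f1 : ((N-k-1).*2 == (N-j'-1).*2.+1) = false by rewrite -!muln2; lia.
    have f2 : ((N-k-1).*2 == (N-j'-1).*2) = false by rewrite -!muln2; lia.
    by rewrite f1 f2 odd_double /= !mulr0 !scale0r addr0.
  have e1 : (2 * N - (k.*2).+1 = (N-k-1).*2.+1)%N by rewrite -!muln2; lia.
  have f1 : ((N-k-1).*2 == (N-k-1).*2.+1) = false by rewrite -!muln2; lia.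
  rewrite e1 hv_odd_row hv_even_row f1 !eqxx.
  have eK : (N-k-1).+1 = (N-k)%N by lia.
  rewrite eK add0r -doubleS dfeg_iter_even dfeg_iter_odd dfeg_iter_even /=.
  set xh := dfeg_half alpha A _.
  apply/matrixP => a b; rewrite !mxE. field. rewrite hL0 andbT pnatr_eq0; lia.
- rewrite add0n in hlN *. rewrite big_ord_recr /=.
  rewrite (sum_pairs _ k (fun i : nat => (alpha * L * hv R (2*N - i.+1) (2*N - (k.*2).+1)) *: A (dfeg_iter N alpha A x0 i))).
  have ec : (2 * N - (k.*2).+1 = (N-k-1).*2.+1)%N by rewrite -!muln2; lia.
  rewrite ec.
  have eK : (N-k-1).+1 = (N-k)%N by lia.
  rewrite (eq_bigr (fun j : 'I_k => (-(alpha*L)) *: (((N - k)%N%:R / ((N - j - 1)%N%:R * (N - j)%N%:R)) *: A (dfeg_iter N alpha A x0 j.*2.+1)))); last first.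
    move=> j _; have := ltn_ord j; move: (nat_of_ord j) => j' hj.
    have e1 : (2 * N - (j'.*2).+1 = (N-j'-1).*2.+1)%N by rewrite -!muln2; lia.
    have e2 : (2 * N - (j'.*2.+1).+1 = (N-j'-1).*2)%N by rewrite -!muln2; lia.
    rewrite e1 e2 hv_odd_row hv_even_row.
    have f1 : ((N-k-1).*2.+1 == (N-j'-1).*2.+1) = false by rewrite -!muln2; lia.
    have f2 : ((N-k-1).*2.+1 == (N-j'-1).*2) = false by rewrite -!muln2; lia.
    have f3 : ((N-k-1).*2.+1 < (N-j'-1).*2)%N by rewrite -!muln2; lia.
    have eJ : (N-j'-1).+1 = (N-j')%N by lia.
    rewrite f1 f2 /= odd_double f3 /= uphalf_double eK eJ mulr0 scale0r add0r scalerA.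
    congr (_ *: _); ring.
  rewrite -scaler_sumr hv_odd_row eqxx dfeg_iter_odd dfeg_iter_even /dfeg_half.
  have hkN : (k < N)%N by rewrite -muln2 in hlN; lia.
  rewrite (dfeg_key R d N alpha A x0 k hkN).
  set Z := \sum_(j < k) _.
  apply/matrixP => a b; rewrite !mxE. field. done.
Qed.
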